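(* Let $L$ spin-orbitals be indexed by $\{1,\dots,L\}$ and $1\le N_{\mathrm{occ}}<L$; o-operators are $\hat a^\dagger_p,\hat a_p$ with $p\le N_{\mathrm{occ}}$, v-operators those with $p>N_{\mathrm{occ}}$. Let $\hat C$ be a chain (product, in a fixed order) of $n\ge1$ excitation operators $\hat E^a_i=\hat a^\dagger_a\hat a_i$ and $n$ deexcitation operators $\hat D^i_a=\hat a^\dagger_i\hat a_a$ ($i\le N_{\mathrm{occ}}<a$), viewed as a chain of $4n$ elementary operators by expanding each (de)excitation operator into its two factors. Let $S=s_1\cdots s_{2n}$ be the word obtained from $\hat C$ by replacing each deexcitation operator by ''('' and each excitation operator by '')'', and suppose $S$ is a Dyck word. For $0\le k\le 2n$ let $d_k$ be the number of ''('' minus the number of '')'' among $s_1,\dots,s_k$, and let $(d^\uparrow_1,\dots,d^\uparrow_n)$ be the list of the values $d_k$ at those positions $k$ with $s_k=$ ''('' (the opening depths). Define $\mathcal W(\hat C)$ as the number of partitions of the $4n$ elementary operators of $\hat C$ into $2n$ pairs such that every pair $(x,y)$, with $x$ to the left of $y$ in the chain, is either an o-creation operator $x$ with an o-annihilation operator $y$, or a v-annihilation operator $x$ with a v-creation operator $y$. Then $$\mathcal W(\hat C)=\Big(\prod_{k=1}^n d^\uparrow_k\Big)^2.$$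
   Context: A Dyck word is a finite word over $\{(,)\}$ with as many opening as closing brackets, every prefix of which contains at least as many opening as closing brackets. Motivation: a partition into pairs is a full contraction in the sense of Wick's theorem relative to the Fermi vacuum (Slater determinant with spin-orbitals $1,\dots,N_{\mathrm{occ}}$ occupied); the pairs allowed in the definition of $\mathcal W$ are exactly those contractions whose Fermi-vacuum value is not forced to vanish by the contraction rules $\langle \hat a^\dagger_r\hat a_s\rangle=\delta_{rs}n_rn_s$, $\langle \hat a_s\hat a^\dagger_r\rangle=\delta_{rs}(1-n_r)(1-n_s)$ (contractions of two creation or two annihilation operators vanish), so $\mathcal W(\hat C)$ counts the ''well'' full contractions. *)

(* Defs.v *)
From mathcomp Require Import all_boot.
Set Implicit Arguments. Unset Strict Implicit. Unset Printing Implicit Defensive.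

Inductive elem := Cre of nat | Ann of nat.

(* (De)excitation operators:  Exc a i = E^a_i = a^dag_a a_i ,
                               Dexc i a = D^i_a = a^dag_i a_a . *)
Inductive exop := Exc of nat & nat | Dexc of nat & nat.

Definition is_dexc (e : exop) : bool := if e is Dexc _ _ then true else false.
Definition is_exc (e : exop) : bool := ~~ is_dexc e.

Definition valid_exop (L Nocc : nat) (e : exop) : bool :=
  match e with
  | Exc a i => [&& 1 <= i, i <= Nocc, Nocc < a & a <= L]
  | Dexc i a => [&& 1 <= i, i <= Nocc, Nocc < a & a <= L]
  end.

Definition expand (e : exop) : seq elem :=
  match e with
  | Exc a i => [:: Cre a; Ann i]
  | Dexc i a => [:: Cre i; Ann a]
  end.

Definition chain_elems (C : seq exop) : seq elem := flatten (map expand C).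

(* bracket word: deexcitation = "(" = true, excitation = ")" = false *)
Definition bracket_word (C : seq exop) : seq bool := map is_dexc C.

Definition dyck (s : seq bool) : bool :=
  (count id s == count negb s) &&
  [forall k : 'I_(size s).+1, count negb (take k s) <= count id (take k s)].

Definition depth (s : seq bool) (k : nat) : nat :=
  count id (take k s) - count negb (take k s).

Definition opening_depths (s : seq bool) : seq nat :=
  [seq depth s k | k <- iota 1 (size s) & nth false s k.-1].

Section W.
Variables (Nocc : nat) (C : seq exop).
Local Notation m := (size (chain_elems C)).
Definition el (x : 'I_m) : elem := nth (Cre 0) (chain_elems C) x.

Definition is_occ_cre (e : elem) : bool := if e is Cre p then p <= Nocc else false.
Definition is_occ_ann (e : elem) : bool := if e is Ann p then p <= Nocc else false.
Definition is_vir_cre (e : elem) : bool := if e is Cre p then Nocc < p else false.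
Definition is_vir_ann (e : elem) : bool := if e is Ann p then Nocc < p else false.

Definition good_pair (x y : 'I_m) : bool :=
  (is_occ_cre (el x) && is_occ_ann (el y)) || (is_vir_ann (el x) && is_vir_cre (el y)).

Definition good_block (B : {set 'I_m}) : bool :=
  [exists x, exists y, [&& B == [set x; y], x < y & good_pair x y]].

Definition W : nat :=
  #|[set P : {set {set 'I_m}} | partition P [set: 'I_m] &&
                                [forall B in P, good_block B]]|.
End W.

(* Main.v *)
Require Import Defs.
From mathcomp Require Import all_boot.
From Stdlib Require Import Lia.
From mathcomp Require Import zify.
Set Implicit Arguments. Unset Strict Implicit. Unset Printing Implicit Defensive.


Section PM.
Variable m : nat.
Variable gp : 'I_m -> 'I_m -> bool.
Definition gb (B : {set 'I_m}) := [exists x, exists y, [&& B == [set x; y], x < y & gp x y]].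
Definition PMs (S : {set 'I_m}) :=
  [set P : {set {set 'I_m}} | partition P S && [forall B in P, gb B]].
Definition adj (v u : 'I_m) := ((v < u) && gp v u) || ((u < v) && gp u v).

Lemma adj_sym v u : adj v u = adj u v.
Proof. by rewrite /adj orbC. Qed.

Lemma adj_neq v u : adj v u -> v != u.
Proof. by case/orP=> /andP[lt _]; apply/eqP=> e; move: lt; rewrite e ltnn. Qed.

Lemma gb_adj v u : adj v u -> gb [set v; u].
Proof.
case/orP=> /andP[lt g]; apply/existsP.
  by exists v; apply/existsP; exists u; rewrite eqxx lt g.
by exists u; apply/existsP; exists v; rewrite setUC eqxx lt g.
Qed.

Lemma gbP B : gb B -> exists x y, B = [set x; y] /\ adj x y.
Proof.
case/existsP=> x /existsP[y /and3P[/eqP-> lt g]].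
by exists x, y; split=> //; rewrite /adj lt g.
Qed.

Lemma key1 S P v : P \in PMs S -> v \in S ->
  \sum_(u in S | adj v u) ([set v; u] \in P : nat) = 1.
Proof.
rewrite inE => /andP[pP /forallP gP] vS.
have tP := partition_trivIset pP.
have cP := cover_partition pP.
have : v \in cover P by rewrite cP.
case/bigcupP=> B BP vB.
have [x [y [EB axy]]] := gbP (implyP (gP B) BP).
have [u [EB' avu]] : exists u, B = [set v; u] /\ adj v u.
  move: vB; rewrite EB !inE => /orP[]/eqP->; first by exists y.
  by exists x; rewrite setUC adj_sym.
have uS : u \in S by rewrite -cP; apply/bigcupP; exists B => //; rewrite EB' !inE eqxx orbT.
rewrite (bigD1 u) ?uS ?avu //= -EB' BP big1 // => u' /andP[/andP[u'S avu'] nu'].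
apply/eqP; rewrite eqb0; apply/negP=> B'P.
have nvu' := adj_neq avu'.
case: (eqVneq B [set v; u']) => [EBB|NBB].
  have : u' \in B by rewrite EBB !inE eqxx orbT.
  by rewrite EB' !inE (negbTE nu') eq_sym (negbTE nvu').
have := (@trivIsetP _ P tP) _ _ BP B'P NBB.
by move/disjointFr => /(_ v); rewrite vB !inE eqxx => /(_ isT).
Qed.

Lemma key2 (S : {set 'I_m}) (v u : 'I_m) : adj v u -> v \in S -> u \in S ->
  #|[set P in PMs S | [set v; u] \in P]| = #|PMs (S :\: [set v; u])|.
Proof.
move=> avu vS uS.
set B := [set v; u].
have BS : B \subset S by apply/subsetP=> x; rewrite !inE => /orP[]/eqP->.
have Bn0 : B != set0 by apply/set0Pn; exists v; rewrite !inE eqxx.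
have nBQ Q : Q \in PMs (S :\: B) -> B \notin Q.
  rewrite inE => /andP[pQ _]; apply/negP=> BQ.
  have := partitionS pQ BQ => /subsetP /(_ v); rewrite !inE eqxx /=.
  by move/(_ isT).
have -> : [set P in PMs S | B \in P] = (fun Q => B |: Q) @: PMs (S :\: B).
  apply/setP=> P; rewrite !inE; apply/idP/imsetP.
    case/andP=> /andP[pP /forallP gP] BP; exists (P :\ B); last by rewrite setD1K.
    rewrite inE partitionD1 //=; apply/forallP=> C; apply/implyP; rewrite !inE.
    by case/andP=> _ CP; exact: (implyP (gP C) CP).
  case=> Q QP ->; rewrite !inE eqxx andbT.
  move: (QP); rewrite inE => /andP[pQ /forallP gQ].
  have -> : S = B :|: (S :\: B) by rewrite setDE setUIr setUCr setIT; apply/esym/setUidPr.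
  rewrite partitionU1 //=; last by rewrite disjoint_sym disjoints_subset setDE subsetIr.
  apply/forallP=> C; apply/implyP; rewrite !inE => /orP[/eqP->|CQ]; first exact: gb_adj.
  exact: (implyP (gQ C) CQ).
apply: card_in_imset => Q1 Q2 Q1P Q2P E.
by rewrite -(setU1K (nBQ _ Q1P)) E setU1K // nBQ.
Qed.

Lemma PM_rec (S : {set 'I_m}) v : v \in S ->
  #|PMs S| = \sum_(u in S | adj v u) #|PMs (S :\: [set v; u])|.
Proof.
move=> vS.
rewrite -sum1_card.
transitivity (\sum_(P in PMs S) \sum_(u in S | adj v u) ([set v; u] \in P : nat)).
  by apply: eq_bigr => P PP; rewrite key1.
rewrite exchange_big /=; apply: eq_bigr => u /andP[uS avu].
rewrite -key2 // -sum1_card [LHS]big_mkcond [RHS]big_mkcond /=.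
apply: eq_bigr => P _; rewrite !inE.
by case: (_ && _); case: (_ \in P).
Qed.

Lemma PM_set0 : #|PMs set0| = 1.
Proof.
rewrite -(cards1 (set0 : {set {set 'I_m}})); apply: eq_card => P.
rewrite !inE partition_set0; case: eqVneq => // ->.
by apply/forallP=> B; rewrite inE.
Qed.
End PM.


Section Phi.
Variable m : nat.
Variables (op cl : bool -> 'I_m -> bool).
Variable gp : 'I_m -> 'I_m -> bool.
Hypothesis gpE : forall x y, gp x y = (op true x && cl true y) || (op false x && cl false y).
Hypothesis Hop : forall c x, op c x -> [&& ~~ cl c x, ~~ cl (~~ c) x & ~~ op (~~ c) x].
Hypothesis Hcl : forall c x, cl c x -> ~~ cl (~~ c) x.
Hypothesis Hcov : forall x, [|| op true x, op false x, cl true x | cl false x].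

Lemma Hcl' c x : cl c x -> ~~ op c x && ~~ op (~~ c) x.
Proof.
move=> h; apply/andP; split; apply/negP => /Hop; rewrite ?negbK h //.
by case/and3P.
Qed.

Definition fS c (S : {set 'I_m}) (x : 'I_m) :=
  #|[set y in S | cl c y & x < y]| - #|[set y in S | op c y & x < y]|.
Definition F c (S : {set 'I_m}) := \prod_(x in S | op c x) fS c S x.
Definition bal (S : {set 'I_m}) := forall c, #|[set y in S | op c y]| = #|[set y in S | cl c y]|.

Lemma adjE c v u : op c v -> adj gp v u = (v < u) && cl c u.
Proof.
move=> h; have /and3P[h1 h2 h3] := Hop h.
rewrite /adj !gpE; case: c h h1 h2 h3 => /= -> /negbTE-> /negbTE-> /negbTE->;
  rewrite ?andbF ?orbF ?andbT //.
Qed.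

Lemma L1 c (S : {set 'I_m}) v u : v \in S -> u \in S -> op c v -> cl c u -> v < u ->
  (forall x, x \in S -> op c x -> x <= v) ->
  F c (S :\: [set v; u]) = \prod_(x in S :\ v | op c x) fS c S x.
Proof.
move=> vS uS ov cu vu mx.
have nou : ~~ op c u by case/andP: (Hcl' cu).
have ncv : ~~ cl c v by case/and3P: (Hop ov).
rewrite /F; apply: eq_big => [x|x].
  rewrite !inE; case: eqVneq => [->|_] //=; case: eqVneq => [->|_] //=.
  by rewrite (negbTE nou) andbF.
rewrite !inE => /andP[/andP[xv xS] ox].
have xlv : x < v.
  have := mx x xS ox; rewrite leq_eqVlt => /orP[/eqP e|//].
  by move: xv; rewrite (val_inj e) eqxx.
rewrite /fS.
have -> : [set y in S :\: [set v; u] | cl c y & x < y] = [set y in S | cl c y & x < y] :\ u.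
  apply/setP=> y; rewrite !inE; case: (eqVneq y v) => [->|_]; [|case: (eqVneq y u) => [->|_]];
  rewrite /= ?(negbTE ncv) ?(negbTE nou) ?andbF ?andbT //; by case: (y \in S).
have -> : [set y in S :\: [set v; u] | op c y & x < y] = [set y in S | op c y & x < y] :\ v.
  apply/setP=> y; rewrite !inE; case: (eqVneq y v) => [->|_]; [|case: (eqVneq y u) => [->|_]];
  rewrite /= ?(negbTE ncv) ?(negbTE nou) ?andbF ?andbT //; by case: (y \in S).
rewrite [#|[set y in S | cl c y & x < y]|](cardsD1 u) [#|[set y in S | op c y & x < y]|](cardsD1 v).
rewrite !inE uS cu vS ov xlv (ltn_trans xlv vu) /=.
lia.
Qed.

Lemma L2 c (S : {set 'I_m}) v : v \in S -> op c v ->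
  (forall x, x \in S -> (op true x || op false x) -> x <= v) ->
  F c S = #|[set u in S | adj gp v u]| * \prod_(x in S :\ v | op c x) fS c S x.
Proof.
move=> vS ov mx.
rewrite /F (bigD1 v) ?vS ?ov //=; congr (_ * _); last first.
  by apply: eq_bigl => x; rewrite !inE; case: (x \in S); case: (op c x); case: (x != v).
rewrite /fS.
have -> : [set y in S | op c y & v < y] = set0.
  apply/setP=> y; rewrite !inE; apply/negP => /and3P[yS oy vy].
  have oy' : op true y || op false y by case: c oy {ov} => ->; rewrite ?orbT.
  by have := mx y yS oy'; rewrite leqNgt vy.
rewrite cards0 subn0; apply: eq_card => y; rewrite !inE (adjE _ ov).
by case: (y \in S); case: (cl c y); case: (v < y).
Qed.

Lemma setrm (p : 'I_m -> bool) (S : {set 'I_m}) v u :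
  p v -> ~~ p u -> [set y in S :\: [set v; u] | p y] = [set y in S | p y] :\ v.
Proof.
move=> pv pu; apply/setP=> y; rewrite !inE.
case: (eqVneq y v) => [->|_]; [|case: (eqVneq y u) => [->|_]];
  rewrite /= ?(negbTE pu) ?andbF ?andbT //.
Qed.

Lemma setrm' (p : 'I_m -> bool) (S : {set 'I_m}) v u :
  ~~ p v -> p u -> [set y in S :\: [set v; u] | p y] = [set y in S | p y] :\ u.
Proof.
move=> pv pu; apply/setP=> y; rewrite !inE.
case: (eqVneq y v) => [->|_]; [|case: (eqVneq y u) => [->|_]];
  rewrite /= ?(negbTE pv) ?andbF ?andbT //.
Qed.

Lemma setrm0 (p : 'I_m -> bool) (S : {set 'I_m}) v u :
  ~~ p v -> ~~ p u -> [set y in S :\: [set v; u] | p y] = [set y in S | p y].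
Proof.
move=> pv pu; apply/setP=> y; rewrite !inE.
case: (eqVneq y v) => [->|_]; [|case: (eqVneq y u) => [->|_]];
  rewrite /= ?(negbTE pu) ?(negbTE pv) ?andbF ?andbT //.
Qed.

Lemma L3 c (S : {set 'I_m}) v u : ~~ op c v -> ~~ cl c v -> ~~ op c u -> ~~ cl c u ->
  F c (S :\: [set v; u]) = F c S.
Proof.
move=> a b d e.
rewrite /F /fS; apply: eq_big => [x|x _].
  rewrite !inE; case: (eqVneq x v) => [->|_]; [|case: (eqVneq x u) => [->|_]];
  rewrite /= ?(negbTE a) ?(negbTE d) ?andbF ?andbT //.
rewrite (setrm0 (p := fun y => cl c y && (x < y))) ?(negbTE b) ?(negbTE e) //.
by rewrite (setrm0 (p := fun y => op c y && (x < y))) ?(negbTE a) ?(negbTE d) //.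
Qed.

Lemma bal_rm (S : {set 'I_m}) c v u : bal S -> v \in S -> u \in S -> op c v -> cl c u ->
  bal (S :\: [set v; u]).
Proof.
move=> hb vS uS ov cu c'.
have /and3P[h1 h2 h3] := Hop ov.
have /andP[h4 h5] := Hcl' cu.
have h6 := Hcl cu.
case: (eqVneq c' c) => [->|ne].
  rewrite (setrm _ ov h4) (setrm' _ h1 cu).
    have := hb c; rewrite (cardsD1 v [set y in S | op c y]) (cardsD1 u [set y in S | cl c y]).
    by rewrite !inE vS ov uS cu /= !add1n => -[].

have -> : c' = ~~ c by case: c c' ne {ov cu h1 h2 h3 h4 h5 h6} => [] [].
by rewrite !setrm0 // hb.
Qed.

Lemma no_open (S : {set 'I_m}) : bal S ->
  (forall x, x \in S -> ~~ op true x && ~~ op false x) -> S = set0.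
Proof.
move=> hb hn; apply/setP => y; rewrite inE; apply/negP => yS.
have /andP[nt nf] := hn y yS.
have := Hcov y; rewrite (negbTE nt) (negbTE nf) /= => hc.
have [c cy] : exists c, cl c y by case/orP: hc => h; [exists true | exists false].
have : 0 < #|[set z in S | cl c z]| by apply/card_gt0P; exists y; rewrite inE yS.
rewrite -hb; apply/negP; rewrite -leqNgt leqn0 cards_eq0; apply/eqP/setP => z.
rewrite !inE; apply/negP => /andP[zS oz]; have /andP[a b] := hn z zS.
by case: c {cy} oz => oz; [move: a | move: b]; rewrite oz.
Qed.

Lemma F0 c : F c set0 = 1.
Proof. by rewrite /F big_pred0 // => x; rewrite inE. Qed.

Lemma tf (f : bool -> nat) c : f true * f false = f c * f (~~ c).
Proof. by case: c => //=; rewrite mulnC. Qed.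

Theorem PM_F (S : {set 'I_m}) : bal S -> #|PMs gp S| = F true S * F false S.
Proof.
move: {2}#|S| (leqnn #|S|) => k; elim: k S => [|k IH] S hS hb.
  move: hS; rewrite leqn0 cards_eq0 => /eqP->.
  by rewrite PM_set0 !F0.
case: (pickP [pred x | (x \in S) && (op true x || op false x)]) => [x0 Hx0 | Hno]; last first.
  rewrite (no_open hb) ?PM_set0 ?F0 // => x xS.
  by have := Hno x; rewrite /= xS /= => /negbT; rewrite negb_or.
case: (@arg_maxnP _ x0 [pred x | (x \in S) && (op true x || op false x)] (fun i => val i) Hx0)
  => v /andP[vS vo] mx.
have mx' : forall x, x \in S -> (op true x || op false x) -> x <= v.
  by move=> x xS ox; apply: (mx x); rewrite /= xS.
have [c ov] : exists c, op c v by case/orP: vo => h; [exists true | exists false].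
have /and3P[h1 h2 h3] := Hop ov.
set R := \prod_(x in S :\ v | op c x) fS c S x.
have mxc : forall x, x \in S -> op c x -> x <= v.
  by move=> x xS ox; apply: mx' => //; case: c ox {ov h1 h2 h3 R} => ->; rewrite ?orbT.
rewrite (PM_rec gp vS).
transitivity (\sum_(u in S | adj gp v u) (R * F (~~ c) S)).
  apply: eq_bigr => u /andP[uS avu].
  move: (avu); rewrite (adjE _ ov) => /andP[vu cu].
  have /andP[h4 h5] := Hcl' cu.
  have h6 := Hcl cu.
  rewrite IH; last first.
  - exact: bal_rm hb vS uS ov cu.
  - rewrite -ltnS; apply: leq_trans hS; apply: proper_card; apply/properP; split.
      exact: subsetDl.
    by exists v => //; rewrite !inE eqxx.
  have E1 := L1 vS uS ov cu vu mxc.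
  have E2 : F (~~ c) (S :\: [set v; u]) = F (~~ c) S.
    by apply: L3; rewrite ?negbK.
  by rewrite (tf (fun b => F b (S :\: [set v; u])) c) E1 E2.
have -> : \sum_(u in S | adj gp v u) (R * F (~~ c) S) =
          \sum_(u in [set u in S | adj gp v u]) (R * F (~~ c) S).
  by apply: eq_bigl => u; rewrite inE.
rewrite sum_nat_const.
have E := L2 vS ov mx'.
by rewrite (tf (fun b => F b S) c) E mulnA.
Qed.
End Phi.


Lemma size_chain C : size (chain_elems C) = (size C).*2.
Proof. by elim: C => //= a C IH; rewrite /chain_elems /= size_cat IH; case: a. Qed.

Lemma nth_chain0 C q : q < size C -> nth (Cre 0) (chain_elems C) q.*2 = nth (Cre 0) (expand (nth (Exc 0 0) C q)) 0.
Proof.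
elim: C q => [|a C IH] [|q] //= hq; rewrite /chain_elems /=; case: a => ? ? //=; exact: IH.
Qed.

Lemma nth_chain1 C q : q < size C -> nth (Cre 0) (chain_elems C) q.*2.+1 = nth (Cre 0) (expand (nth (Exc 0 0) C q)) 1.
Proof.
elim: C q => [|a C IH] [|q] //= hq; rewrite /chain_elems /=; case: a => ? ? //=; exact: IH.
Qed.

Lemma sum2 k (G : nat -> nat) : \sum_(0 <= x < k.*2) G x = \sum_(0 <= q < k) (G q.*2 + G q.*2.+1).
Proof.
elim: k => [|k IH]; first by rewrite !big_geq.
by rewrite doubleS !big_nat_recr //= IH addnA.
Qed.

Lemma prod2 k (G : nat -> nat) : \prod_(0 <= x < k.*2) G x = \prod_(0 <= q < k) (G q.*2 * G q.*2.+1).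
Proof.
elim: k => [|k IH]; first by rewrite !big_geq.
by rewrite doubleS !big_nat_recr //= IH mulnA.
Qed.

Lemma count_drop_sum (b : pred exop) C j :
  count b (drop j C) = \sum_(0 <= q < size C) (b (nth (Exc 0 0) C q) && (j <= q)).
Proof.
elim: C j => [|a C IH] j /=; first by rewrite big_geq.
rewrite big_nat_recl //=; case: j => [|j] /=.
  have := IH 0; rewrite drop0 => ->; congr (_ + _); first by rewrite andbT.
rewrite IH ltn0 andbF /=; apply: eq_bigr => i _; by rewrite ltnS.
Qed.


Lemma cardP m (p : nat -> bool) : #|[set y in [set: 'I_m] | p y]| = \sum_(0 <= y < m) p y.
Proof.
rewrite -sum1_card big_mkcond big_mkord /=; apply: eq_bigr => y _.
by rewrite !inE; case: (p y).
Qed.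

Lemma prodP m (q : 'I_m -> bool) (f : 'I_m -> nat) (pn : nat -> bool) (fn : nat -> nat) :
  (forall x, q x = pn x) -> (forall x, f x = fn x) ->
  \prod_(x in [set: 'I_m] | q x) f x = \prod_(0 <= x < m | pn x) fn x.
Proof.
move=> hq hf; rewrite big_mkord; apply: eq_big => [x|x _]; by rewrite ?inE ?hq ?hf.
Qed.

Definition E0 e := nth (Cre 0) (expand e) 0.
Definition E1 e := nth (Cre 0) (expand e) 1.

Lemma facts0 L Nocc e : valid_exop L Nocc e ->
  [/\ is_occ_cre Nocc (E0 e) = is_dexc e, is_occ_ann Nocc (E0 e) = false,
      is_vir_ann Nocc (E0 e) = false & is_vir_cre Nocc (E0 e) = is_exc e].
Proof.
by case: e => x y /= /and4P[h1 h2 h3 h4]; split; apply/idP/idP => //=; lia.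
Qed.

Lemma facts1 L Nocc e : valid_exop L Nocc e ->
  [/\ is_occ_cre Nocc (E1 e) = false, is_occ_ann Nocc (E1 e) = is_exc e,
      is_vir_ann Nocc (E1 e) = is_dexc e & is_vir_cre Nocc (E1 e) = false].
Proof.
by case: e => x y /= /and4P[h1 h2 h3 h4]; split; apply/idP/idP => //=; lia.
Qed.

Lemma nthE0 C q : q < size C -> nth (Cre 0) (chain_elems C) q.*2 = E0 (nth (Exc 0 0) C q).
Proof. exact: nth_chain0. Qed.
Lemma nthE1 C q : q < size C -> nth (Cre 0) (chain_elems C) q.*2.+1 = E1 (nth (Exc 0 0) C q).
Proof. exact: nth_chain1. Qed.

Section Inst.
Variables (L Nocc : nat) (C : seq exop).
Hypothesis hv : all (valid_exop L Nocc) C.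
Local Notation m := (size (chain_elems C)).
Definition opI (c : bool) (x : 'I_m) :=
  if c then is_occ_cre Nocc (@el C x) else is_vir_ann Nocc (@el C x).
Definition clI (c : bool) (x : 'I_m) :=
  if c then is_occ_ann Nocc (@el C x) else is_vir_cre Nocc (@el C x).
Definition En n := nth (Cre 0) (chain_elems C) n.
Definition opn c n := if c then is_occ_cre Nocc (En n) else is_vir_ann Nocc (En n).
Definition cln c n := if c then is_occ_ann Nocc (En n) else is_vir_cre Nocc (En n).

Lemma gpE x y : good_pair Nocc x y = opI true x && clI true y || opI false x && clI false y.
Proof. by []. Qed.

Lemma hop c x : opI c x -> [&& ~~ clI c x, ~~ clI (~~ c) x & ~~ opI (~~ c) x].
Proof. by rewrite /opI /clI; case: c; case: (el x) => p /=; lia. Qed.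

Lemma hcl c x : clI c x -> ~~ clI (~~ c) x.
Proof. by rewrite /clI; case: c; case: (el x) => p /=; lia. Qed.

Lemma hcov x : [|| opI true x, opI false x, clI true x | clI false x].
Proof. by rewrite /opI /clI; case: (el x) => p /=; lia. Qed.

Lemma F_nat c : F opI clI c setT =
  \prod_(0 <= x < m | opn c x)
     (\sum_(0 <= y < m) (cln c y && (x < y)) - \sum_(0 <= y < m) (opn c y && (x < y))).
Proof.
rewrite /F; apply: prodP => [x|x]; first by case: c.
by rewrite /fS (@cardP _ (fun n => cln c n && (x < n))) (@cardP _ (fun n => opn c n && (x < n))).
Qed.

Definition D := \prod_(0 <= q < size C)
  (if is_dexc (nth (Exc 0 0) C q)
   then count is_exc (drop q.+1 C) - count is_dexc (drop q.+1 C) else 1).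

Lemma F_D c : F opI clI c setT = D.
Proof.
rewrite F_nat size_chain big_mkcond prod2 /D; apply: eq_big_nat => q /andP[_ hq].
have hvq := (all_nthP (Exc 0 0) hv) q hq.
set e := nth (Exc 0 0) C q.
have [a0 b0 c0 d0] := facts0 hvq; have [a1 b1 c1 d1] := facts1 hvq.
have hs : forall (P : nat -> bool),
  \sum_(0 <= y < (size C).*2) P y = \sum_(0 <= r < size C) (P r.*2 + P r.*2.+1) by move=> P; exact: sum2.
rewrite /opn /cln /En !hs nthE0 // nthE1 //.
have step : forall (P : pred exop) (G : nat -> nat), is_dexc (nth (Exc 0 0) C q) ->
  (forall r, r < size C -> G r = P (nth (Exc 0 0) C r) && (q <= r)) ->
  (P (nth (Exc 0 0) C q) -> ~~ is_dexc (nth (Exc 0 0) C q)) ->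
  \sum_(0 <= r < size C) G r = count P (drop q.+1 C).
  move=> P G hd hG hP; rewrite count_drop_sum; apply: eq_big_nat => r /andP[_ hr].
  rewrite hG //; case: (eqVneq r q) => [->|nrq]; last by rewrite [q <= r]leq_eqVlt eq_sym (negbTE nrq).
  rewrite leqnn ltnn andbF andbT; case E: (P _) => //; by move: (hP E); rewrite hd.
have step' : forall (P : pred exop) (G : nat -> nat),
  (forall r, r < size C -> G r = P (nth (Exc 0 0) C r) && (q < r)) ->
  \sum_(0 <= r < size C) G r = count P (drop q.+1 C).
  move=> P G hG; rewrite count_drop_sum; apply: eq_big_nat => r /andP[_ hr]; by rewrite hG.
case: c => /=.
  rewrite a0 a1 muln1; case: (boolP (is_dexc _)) => hd //.
  congr (_ - _).
    apply: (step is_exc); [exact: hd| |exact: id].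
    move=> r hr; have hvr := (all_nthP (Exc 0 0) hv) r hr.
    have [a0' b0' c0' d0'] := facts0 hvr; have [a1' b1' c1' d1'] := facts1 hvr.
    by rewrite nthE0 // nthE1 // b0' b1' /= ltnS leq_double.
  apply: (step' is_dexc) => r hr; have hvr := (all_nthP (Exc 0 0) hv) r hr.
  have [a0' b0' c0' d0'] := facts0 hvr; have [a1' b1' c1' d1'] := facts1 hvr.
  by rewrite nthE0 // nthE1 // a0' a1' /= addn0 ltn_double.
rewrite c0 c1 mul1n; case: (boolP (is_dexc _)) => hd //.
congr (_ - _).
  apply: (step' is_exc) => r hr; have hvr := (all_nthP (Exc 0 0) hv) r hr.
  have [a0' b0' c0' d0'] := facts0 hvr; have [a1' b1' c1' d1'] := facts1 hvr.
  by rewrite nthE0 // nthE1 // d0' d1' /= addn0 ltn_Sdouble.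
apply: (step' is_dexc) => r hr; have hvr := (all_nthP (Exc 0 0) hv) r hr.
have [a0' b0' c0' d0'] := facts0 hvr; have [a1' b1' c1' d1'] := facts1 hvr.
by rewrite nthE0 // nthE1 // c0' c1' /= add0n ltnS ltn_double.
Qed.

Lemma hbal : count is_exc C = count is_dexc C -> bal opI clI setT.
Proof.
move=> hc c.
rewrite (@cardP _ (opn c)) (@cardP _ (cln c)) size_chain !sum2.
have cs : forall P : pred exop, count P C = \sum_(0 <= r < size C) P (nth (Exc 0 0) C r).
  by move=> P; rewrite -(drop0 C) count_drop_sum drop0; apply: eq_bigr => r _; rewrite andbT.
have E : forall (P : pred exop) (G : nat -> nat),
  (forall r, r < size C -> G r = P (nth (Exc 0 0) C r)) -> \sum_(0 <= r < size C) G r = count P C.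
  by move=> P G hG; rewrite cs; apply: eq_big_nat => r /andP[_ hr]; rewrite hG.
rewrite (E is_dexc); last first.
  move=> r hr; have hvr := (all_nthP (Exc 0 0) hv) r hr.
  have [a0' b0' c0' d0'] := facts0 hvr; have [a1' b1' c1' d1'] := facts1 hvr.
  by rewrite /opn /En nthE0 // nthE1 //; case: c; rewrite ?a0' ?a1' ?c0' ?c1' ?addn0.
rewrite (E is_exc) //.
move=> r hr; have hvr := (all_nthP (Exc 0 0) hv) r hr.
have [a0' b0' c0' d0'] := facts0 hvr; have [a1' b1' c1' d1'] := facts1 hvr.
by rewrite /cln /En nthE0 // nthE1 //; case: c; rewrite ?b0' ?b1' ?d0' ?d1' ?addn0.
Qed.

Lemma opening_D : count is_exc C = count is_dexc C ->
  \prod_(d <- opening_depths (bracket_word C)) d = D.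
Proof.
move=> hc.
have Ei : iota 1 (size (bracket_word C)) = map (addn 1) (iota 0 (size (bracket_word C))).
  by rewrite -iotaDl.
rewrite /opening_depths big_map big_filter Ei big_map big_mkcond /D.
rewrite /bracket_word size_map /index_iota subn0; apply: eq_big_seq => p.
rewrite mem_iota add0n => hp; rewrite add1n /= (nth_map (Exc 0 0)) //.
case: (is_dexc _) => //.
rewrite /depth -map_take !count_map.
have h1 := count_cat is_exc (take p.+1 C) (drop p.+1 C).
have h2 := count_cat is_dexc (take p.+1 C) (drop p.+1 C).
rewrite cat_take_drop in h1 h2.
have -> : count (preim is_dexc id) (take p.+1 C) = count is_dexc (take p.+1 C) by [].
have -> : count (preim is_dexc negb) (take p.+1 C) = count is_exc (take p.+1 C) by [].
lia.
Qed.
End Inst.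

Theorem mainTheorem4 (L Nocc n : nat) (C : seq exop) :
  1 <= Nocc -> Nocc < L -> 1 <= n ->
  all (valid_exop L Nocc) C ->
  count is_exc C = n -> count is_dexc C = n ->
  dyck (bracket_word C) ->
  W Nocc C = (\prod_(d <- opening_depths (bracket_word C)) d) ^ 2.
Proof.
move=> _ _ _ hv h1 h2 _.
have hc : count is_exc C = count is_dexc C by rewrite h1 h2.
rewrite (opening_D hv hc).
have -> : W Nocc C = #|PMs (@good_pair Nocc C) setT| by [].
rewrite (PM_F (@gpE Nocc C) (hop hv) (hcl hv) (hcov hv) (hbal hv hc)).
by rewrite !(F_D hv) mulnn.
Qed.
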